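(* Let $(X,u)$ and $(Y,v)$ be Čech closure spaces, let $Y^X$ be the set of all continuous maps $(X,u)\to(Y,v)$, and let $\sigma$ be a Čech closure operator on $Y^X$. Call a topological space $Z$ ''test'' if $Z$ is either a $T_1$-space having at most one non-isolated point or the Sierpinski space. Then: (1) $\sigma$ is proper if and only if for every test space $Z$ and every continuous $g:Z\times(X,u)\to(Y,v)$, the map $g^*:Z\to(Y^X,\sigma)$ is continuous; (2) $\sigma$ is admissible if and only if for every test space $Z$ and every $g:Z\times X\to Y$ with $g^*(Z)\subset Y^X$ such that $g^*:Z\to(Y^X,\sigma)$ is continuous, the map $g:Z\times(X,u)\to(Y,v)$ is continuous.
   Context: A Čech closure space $(X,u)$ is a set $X$ with an operator $u:\mathcal P(X)\to\mathcal P(X)$ satisfying $u(\emptyset)=\emptyset$, $A\subset u(A)$, and $u(A\cup B)=u(A)\cup u(B)$. The interior is $\mathrm{int}_u A=X\setminus u(X\setminus A)$; $U$ is a neighbourhood of $x$ if $x\in\mathrm{int}_uU$. Topological spaces are regarded as closure spaces via their Kuratowski closure. A map $f:(X,u)\to(Y,v)$ is continuous if $f(u(A))\subset v(f(A))$ for all $A$. The product $(Z,w)\times(X,u)$ is $Z\times X$ with the closure operator for which the sets $W\times U$ ($W$ a neighbourhood of $z$, $U$ of $x$) form a neighbourhood base at $(z,x)$. For $g:Z\times X\to Y$, $g^*(z)(x)=g(z,x)$. A closure operator $\sigma$ on $Y^X$ is proper if for every closure space $(Z,w)$, continuity of $g:(Z,w)\times(X,u)\to(Y,v)$ implies continuity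 of $g^*:(Z,w)\to(Y^X,\sigma)$; it is admissible if for every closure space $(Z,w)$ and every $g:Z\times X\to Y$ with $g^*(Z)\subset Y^X$, continuity of $g^*:(Z,w)\to(Y^X,\sigma)$ implies continuity of $g$. The Sierpinski space is $\{0,1\}$ with open sets $\emptyset,\{1\},\{0,1\}$. *)

(* Defs.v *)
Definition set (T : Type) := T -> Prop.

Definition image {A B : Type} (f : A -> B) (S : set A) : set B :=
  fun b => exists a, S a /\ f a = b.

(* Čech closure operator (set equalities stated pointwise). *)
Definition is_closure {X : Type} (u : set X -> set X) : Prop :=
  (forall x, ~ u (fun _ => False) x) /\
  (forall A x, A x -> u A x) /\
  (forall A B x, u (fun y => A y \/ B y) x <-> (u A x \/ u B x)).

Definition interior {X : Type} (u : set X -> set X) (A : set X) : set X :=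
  fun x => ~ u (fun y => ~ A y) x.

Definition nbhd {X : Type} (u : set X -> set X) (U : set X) (x : X) : Prop :=
  interior u U x.

Definition continuous {X Y : Type} (u : set X -> set X) (v : set Y -> set Y)
  (f : X -> Y) : Prop :=
  forall A x, u A x -> v (image f A) (f x).

Definition prod_cl {Z X : Type} (w : set Z -> set Z) (u : set X -> set X)
  (A : set (Z * X)) : set (Z * X) :=
  fun p => forall W U, nbhd w W (fst p) -> nbhd u U (snd p) ->
    exists q, A q /\ W (fst q) /\ U (snd q).

Definition CMap {X Y : Type} (u : set X -> set X) (v : set Y -> set Y) : Type :=
  { f : X -> Y | continuous u v f }.

(* g^* : Z -> Y^X, given that each g(z,.) is continuous (g^*(Z) ⊂ Y^X). *)
Definition gstar {Z X Y : Type} (u : set X -> set X) (v : set Y -> set Y)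
  (g : Z * X -> Y) (Hg : forall z, continuous u v (fun x => g (z, x)))
  : Z -> CMap u v :=
  fun z => exist _ (fun x => g (z, x)) (Hg z).

Definition proper_on {X Y : Type} (u : set X -> set X) (v : set Y -> set Y)
  (sigma : set (CMap u v) -> set (CMap u v))
  (Zok : forall Z : Type, (set Z -> set Z) -> Prop) : Prop :=
  forall (Z : Type) (w : set Z -> set Z), Zok Z w ->
  forall (g : Z * X -> Y) (Hg : forall z, continuous u v (fun x => g (z, x))),
    continuous (prod_cl w u) v g -> continuous w sigma (@gstar Z X Y u v g Hg).

Definition admissible_on {X Y : Type} (u : set X -> set X) (v : set Y -> set Y)
  (sigma : set (CMap u v) -> set (CMap u v))
  (Zok : forall Z : Type, (set Z -> set Z) -> Prop) : Prop :=
  forall (Z : Type) (w : set Z -> set Z), Zok Z w ->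
  forall (g : Z * X -> Y) (Hg : forall z, continuous u v (fun x => g (z, x))),
    continuous w sigma (@gstar Z X Y u v g Hg) -> continuous (prod_cl w u) v g.

Definition any_closure_space (Z : Type) (w : set Z -> set Z) : Prop :=
  is_closure w.

Definition proper {X Y : Type} (u : set X -> set X) (v : set Y -> set Y)
  (sigma : set (CMap u v) -> set (CMap u v)) : Prop :=
  proper_on u v sigma any_closure_space.

Definition admissible {X Y : Type} (u : set X -> set X) (v : set Y -> set Y)
  (sigma : set (CMap u v) -> set (CMap u v)) : Prop :=
  admissible_on u v sigma any_closure_space.

Definition is_topology {Z : Type} (op : set Z -> Prop) : Prop :=
  op (fun _ => True) /\ op (fun _ => False) /\
  (forall O1 O2, op O1 -> op O2 -> op (fun z => O1 z /\ O2 z)) /\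
  (forall (F : set (set Z)), (forall O, F O -> op O) ->
     op (fun z => exists O, F O /\ O z)).

Definition kcl {Z : Type} (op : set Z -> Prop) (A : set Z) : set Z :=
  fun z => forall O, op O -> O z -> exists a, A a /\ O a.

Definition T1 {Z : Type} (op : set Z -> Prop) : Prop :=
  forall z z', z <> z' -> exists O, op O /\ O z /\ ~ O z'.

Definition isolated {Z : Type} (op : set Z -> Prop) (z : Z) : Prop :=
  op (fun y => y = z).

Definition at_most_one_nonisolated {Z : Type} (op : set Z -> Prop) : Prop :=
  forall z1 z2, ~ isolated op z1 -> ~ isolated op z2 -> z1 = z2.

(* Sierpinski space {0,1} = bool (1 = true), open sets: empty, {1}, {0,1}. *)
Definition sierpinski_open (O : set bool) : Prop :=
  (forall b, ~ O b) \/ (forall b, O b <-> b = true) \/ (forall b, O b).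

Definition is_sierpinski {Z : Type} (op : set Z -> Prop) : Prop :=
  exists h : Z -> bool,
    (forall z1 z2, h z1 = h z2 -> z1 = z2) /\ (forall b, exists z, h z = b) /\
    (forall O, op O <-> sierpinski_open (image h O)).

Definition test_space (Z : Type) (op : set Z -> Prop) : Prop :=
  is_topology op /\ ((T1 op /\ at_most_one_nonisolated op) \/ is_sierpinski op).

Definition test_closure_space (Z : Type) (w : set Z -> set Z) : Prop :=
  exists op : set Z -> Prop, test_space Z op /\ (forall A z, w A z <-> kcl op A z).

(* Main.v *)
Require Import Defs.
From Stdlib Require Import Classical FunctionalExtensionality PropExtensionality.

Lemma mono {X} (u : set X -> set X) : is_closure u ->
  forall (A B : set X), (forall x, A x -> B x) -> forall x, u A x -> u B x.
Proof.
  intros [_ [_ H]] A B HAB x HA.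
  assert (E : B = (fun y => A y \/ B y)).
  { apply functional_extensionality; intro y; apply propositional_extensionality.
    split; auto. intros [h|h]; auto. }
  rewrite E. apply H. left. exact HA.
Qed.

Lemma ext_cl {X} (u : set X -> set X) : is_closure u ->
  forall (A : set X) x, u A x -> A x \/ True.
Proof. auto. Qed.

Lemma nbhd_pt {X} (u : set X -> set X) W x : is_closure u -> nbhd u W x -> W x.
Proof.
  intros Hu H. apply NNPP; intro Hn. apply H. apply (proj1 (proj2 Hu)). exact Hn.
Qed.

Lemma nbhd_full {X} (u : set X -> set X) x : is_closure u -> nbhd u (fun _ => True) x.
Proof.
  intros Hu H. apply (proj1 Hu x). apply (mono u Hu _ _ (fun y h => h I) x H).
Qed.

Lemma nbhd_and {X} (u : set X -> set X) W1 W2 x : is_closure u ->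
  nbhd u W1 x -> nbhd u W2 x -> nbhd u (fun y => W1 y /\ W2 y) x.
Proof.
  intros Hu H1 H2 H.
  apply (mono u Hu _ (fun y => ~ W1 y \/ ~ W2 y)) in H.
  - apply (proj2 (proj2 Hu)) in H. destruct H; auto.
  - intros y hy. apply NNPP; intro hn. apply hy. split; apply NNPP; intro; apply hn; auto.
Qed.

Lemma kcl_nbhd {Z} (op : set Z -> Prop) O p : nbhd (kcl op) O p ->
  exists O', op O' /\ O' p /\ forall q, O' q -> O q.
Proof.
  intro H. apply NNPP; intro H'. apply H. intros O' h1 h2.
  apply NNPP; intro H''. apply H'. exists O'. split; auto. split; auto.
  intros q hq. apply NNPP; intro hn. apply H''. exists q; auto.
Qed.

Lemma not_kcl {Z} (op : set Z -> Prop) A z : ~ kcl op A z ->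
  exists O, op O /\ O z /\ forall a, O a -> ~ A a.
Proof.
  intro H. apply NNPP; intro H'. apply H. intros O hO hz.
  apply NNPP; intro H''. apply H'. exists O. split; auto. split; auto.
  intros a ha hA. apply H''. exists a; auto.
Qed.

Lemma closure_of_test Z w : test_closure_space Z w -> is_closure w.
Proof.
  intros [op [[Ht _] Hiff]]. destruct Ht as [Hfull [Hemp [Hint Hun]]].
  split; [|split].
  - intros z H. apply Hiff in H. destruct (H _ Hfull I) as [a [[] _]].
  - intros A z Hz. apply Hiff. intros O _ HO. exists z; auto.
  - intros A B z. split.
    + intro H. apply Hiff in H.
      destruct (classic (w A z)) as [h|hA]; [left; exact h|].
      destruct (classic (w B z)) as [h|hB]; [right; exact h|].
      exfalso.
      assert (kA : ~ kcl op A z) by (intro k; apply hA, Hiff, k).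
      assert (kB : ~ kcl op B z) by (intro k; apply hB, Hiff, k).
      apply not_kcl in kA as [O1 [o1 [z1 s1]]].
      apply not_kcl in kB as [O2 [o2 [z2 s2]]].
      destruct (H _ (Hint _ _ o1 o2) (conj z1 z2)) as [a [[ha|ha] [h1 h2]]].
      * exact (s1 a h1 ha).
      * exact (s2 a h2 ha).
    + intros [H|H]; apply Hiff; apply Hiff in H; intros O hO hz;
        destruct (H O hO hz) as [a [ha hb]]; exists a; auto.
Qed.

Definition opF {Z} (F : set Z -> Prop) (O : set (option Z)) : Prop :=
  O None -> F (fun a => O (Some a)).

Lemma opF_test {Z} (F : set Z -> Prop) :
  F (fun _ => True) ->
  (forall S1 S2, F S1 -> F S2 -> F (fun a => S1 a /\ S2 a)) ->
  (forall S S', F S -> (forall a, S a -> S' a) -> F S') ->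
  (forall a, F (fun b => b <> a)) ->
  test_closure_space (option Z) (kcl (opF F)).
Proof.
  intros HT Hand Hup HT1. exists (opF F). split; [|intros; tauto]. split.
  - split; [|split; [|split]].
    + intros _. exact HT.
    + intros [].
    + intros O1 O2 H1 H2 [h1 h2]. exact (Hand _ _ (H1 h1) (H2 h2)).
    + intros Fam HF [O [HO HN]]. apply (Hup _ _ (HF O HO HN)). intros a Ha. exists O; auto.
  - left. split.
    + intros z z' Hne. destruct z as [a|].
      * exists (fun q => q = Some a). split; [intro H; discriminate|]. split; auto.
      * destruct z' as [b|]; [|congruence].
        exists (fun q => match q with None => True | Some c => c <> b end).
        split; [intros _; exact (HT1 b)|]. split; simpl; auto.
    + intros z1 z2 H1 H2. destruct z1 as [a|].
      * exfalso; apply H1; intro H; discriminate.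
      * destruct z2 as [b|]; auto. exfalso; apply H2; intro H; discriminate.
Qed.

Definition optphi {Z} (z : Z) (q : option Z) : Z :=
  match q with None => z | Some a => a end.

Lemma opF_cont {Z} (w : set Z -> set Z) (F : set Z -> Prop) z :
  is_closure w -> (forall W, nbhd w W z -> F W) ->
  continuous (kcl (opF F)) w (optphi z).
Proof.
  intros Hw HF B q Hq. destruct q as [a|].
  - destruct (Hq (fun q => q = Some a)) as [b [Hb Hba]].
    + intro H; discriminate.
    + reflexivity.
    + subst b. apply (proj1 (proj2 Hw)). exists (Some a); auto.
  - apply NNPP; intro Hn.
    assert (Hnb : nbhd w (fun y => ~ image (optphi z) B y) z).
    { intro H. apply Hn. apply (mono w Hw _ _ (fun y h => NNPP _ h) z H). }
    destruct (Hq (fun q => match q with None => True | Some a => ~ image (optphi z) B a end))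
      as [q' [Hq' HO]].
    + intros _. apply HF. exact Hnb.
    + exact I.
    + destruct q' as [a|].
      * apply HO. exists (Some a); auto.
      * apply (nbhd_pt w _ z Hw Hnb). exists None. auto.
Qed.

Lemma sier_ext (O O' : set bool) : (forall b, O b <-> O' b) ->
  sierpinski_open O -> sierpinski_open O'.
Proof.
  intros E [H|[H|H]].
  - left. intros b h. apply (H b), E, h.
  - right; left. intro b. rewrite <- E. apply H.
  - right; right. intro b. apply E, H.
Qed.

Lemma sier_test : test_closure_space bool (kcl sierpinski_open).
Proof.
  exists sierpinski_open. split; [|intros; tauto]. split.
  - split; [|split; [|split]].
    + right; right; auto.
    + left; auto.
    + intros O1 O2 [H1|[H1|H1]] [H2|[H2|H2]].
      all: try (left; intros b [h1 h2]; eauto; fail).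
      all: try (left; intros b [h1 h2]; eapply H1; eauto; fail).
      all: try (left; intros b [h1 h2]; eapply H2; eauto; fail).
      all: try (right; right; auto; fail).
      all: right; left; intro b; specialize (H1 b); specialize (H2 b); tauto.
    + intros Fam HF.
      destruct (classic (exists O, Fam O /\ O false)) as [[O [HO Hf]]|Hnf].
      * right; right. intro b. exists O. split; auto.
        destruct (HF O HO) as [E|[E|E]].
        -- exfalso; exact (E _ Hf).
        -- apply E in Hf; discriminate.
        -- apply E.
      * destruct (classic (exists O, Fam O /\ O true)) as [[O [HO Ht]]|Hnt].
        -- right; left. intro b; split.
           ++ intros [O' [HO' H']]. destruct b; auto. exfalso; apply Hnf; eauto.
           ++ intro; subst. eauto.
        -- left. intros b [O' [HO' H']]. destruct b; eauto.
  - right. exists (fun b => b). split; [auto|]. split; [eauto|].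
    intro O. split; intro H.
    + apply (sier_ext O); auto. intro b; split; [intro h; exists b; auto|].
      intros [c [hc <-]]; exact hc.
    + apply (sier_ext (image (fun b => b) O)); auto. intro b; split; [|intro h; exists b; auto].
      intros [c [hc <-]]; exact hc.
Qed.

Lemma sier_cont {Z} (w : set Z -> set Z) a z : is_closure w ->
  w (fun y => y = a) z ->
  continuous (kcl sierpinski_open) w (fun b : bool => if b then a else z).
Proof.
  intros Hw Ha B b Hb. destruct b.
  - destruct (Hb (fun b => b = true)) as [c [Hc Hct]].
    + right; left. intro; tauto.
    + reflexivity.
    + subst c. apply (proj1 (proj2 Hw)). exists true; auto.
  - destruct (Hb (fun _ => True)) as [c [Hc _]].
    + right; right; auto.
    + exact I.
    + destruct c.
      * apply (mono w Hw (fun y => y = a)); [|exact Ha]. intros y ->. exists true; auto.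
      * apply (proj1 (proj2 Hw)). exists false; auto.
Qed.

Lemma sier_nbhd_false (O : set bool) : nbhd (kcl sierpinski_open) O false -> O true.
Proof.
  intro H. apply kcl_nbhd in H as [O' [HO' [Hf Hs]]]. apply Hs.
  destruct HO' as [E|[E|E]].
  - exfalso; exact (E _ Hf).
  - apply E in Hf; discriminate.
  - apply E.
Qed.

Lemma pull_prod {Z Z' X} (w : set Z -> set Z) (w' : set Z' -> set Z') (u : set X -> set X)
  (phi : Z' -> Z) : is_closure w -> continuous w' w phi ->
  forall B p, prod_cl w' u B p ->
  prod_cl w u (image (fun q => (phi (fst q), snd q)) B) (phi (fst p), snd p).
Proof.
  intros Hw Hphi B p Hp W U HW HU. simpl in *.
  assert (HW' : nbhd w' (fun q => W (phi q)) (fst p)).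
  { intro H. apply Hphi in H. apply HW. refine (mono w Hw _ _ _ _ H).
    intros y [q [hq <-]]. exact hq. }
  destruct (Hp _ _ HW' HU) as [q [hq [h1 h2]]].
  exists (phi (fst q), snd q). split; [exists q; auto|]. simpl; auto.
Qed.

Lemma proper_rev (X Y : Type) (u : set X -> set X) (v : set Y -> set Y)
  (sigma : set (CMap u v) -> set (CMap u v)) :
  is_closure u -> is_closure v -> is_closure sigma ->
  proper_on u v sigma test_closure_space -> proper u v sigma.
Proof.
  intros Hu Hv Hs Hp Z w Hw g Hg Hgc A z Hz.
  assert (RED : forall Z' (w' : set Z' -> set Z') (phi : Z' -> Z) p B,
    test_closure_space Z' w' -> continuous w' w phi -> w' B p -> phi p = z ->
    (forall b, B b -> A (phi b)) ->
    sigma (image (gstar u v g Hg) A) (gstar u v g Hg z)).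
  { intros Z' w' phi p B Ht Hphi HB Hpz HBA.
    set (g' := fun q : Z' * X => g (phi (fst q), snd q)).
    set (Hg' := (fun q => Hg (phi q)) : forall q, continuous u v (fun x => g' (q, x))).
    assert (Hg'c : continuous (prod_cl w' u) v g').
    { intros C q Hq. apply (pull_prod w w' u phi Hw Hphi) in Hq. apply Hgc in Hq.
      refine (mono v Hv _ _ _ _ Hq).
      intros y [r [[s [hs <-]] <-]]. exists s. split; auto. }
    pose proof (Hp Z' w' Ht g' Hg' Hg'c B p HB) as Hc.
    assert (E : gstar u v g' Hg' p = gstar u v g Hg (phi p)) by reflexivity.
    rewrite E, Hpz in Hc. refine (mono sigma Hs _ _ _ _ Hc).
    intros f [b [hb <-]]. exists (phi b). split; auto. }
  destruct (classic (exists a, A a /\ w (fun y => y = a) z)) as [[a [hA ha]]|Hn].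
  - apply (RED bool (kcl sierpinski_open) (fun b : bool => if b then a else z) false
      (fun b => b = true) sier_test (sier_cont w a z Hw ha)); auto.
    + intros O [E|[E|E]] Hf.
      * exfalso; exact (E _ Hf).
      * apply E in Hf; discriminate.
      * exists true. split; [reflexivity | apply E; reflexivity].
    + intros b ->. exact hA.
  - set (F := fun S : set Z => exists W, nbhd w W z /\ forall a, A a -> W a -> S a).
    apply (RED (option Z) (kcl (opF F)) (optphi z) None
      (fun q => match q with Some a => A a | None => False end)); auto.
    + apply opF_test.
      * exists (fun _ => True). split; auto. apply nbhd_full; auto.
      * intros S1 S2 [W1 [h1 s1]] [W2 [h2 s2]]. exists (fun y => W1 y /\ W2 y).
        split; [apply nbhd_and; auto|]. intros a ha [k1 k2]; split; auto.
      * intros S S' [W [h s]] Hs'. exists W; split; auto.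
      * intro a. destruct (classic (A a)) as [hA|hA].
        -- exists (fun b => b <> a). split; auto.
           intro H. apply Hn. exists a. split; auto.
           refine (mono w Hw _ _ _ _ H). intros y hy. apply NNPP; exact hy.
        -- exists (fun _ => True). split; [apply nbhd_full; auto|].
           intros b hb _ ->. exact (hA hb).
    + apply opF_cont; auto. intros W hW. exists W; split; auto.
    + intros O HO HN. destruct (HO HN) as [W [hW hS]].
      assert (Hex : exists a, A a /\ W a).
      { apply NNPP; intro H. apply hW. refine (mono w Hw _ _ _ _ Hz).
        intros y hy hWy. apply H; eauto. }
      destruct Hex as [a [ha hWa]]. exists (Some a). split; auto.
    + intros [a|] hb; simpl; [exact hb | destruct hb].
Qed.

Lemma admissible_rev (X Y : Type) (u : set X -> set X) (v : set Y -> set Y)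
  (sigma : set (CMap u v) -> set (CMap u v)) :
  is_closure u -> is_closure v -> is_closure sigma ->
  admissible_on u v sigma test_closure_space -> admissible u v sigma.
Proof.
  intros Hu Hv Hs Ha Z w Hw g Hg Hgs A [z x] Hzx.
  assert (RED : forall Z' (w' : set Z' -> set Z') (phi : Z' -> Z) p B,
    test_closure_space Z' w' -> continuous w' w phi -> prod_cl w' u B (p, x) -> phi p = z ->
    (forall q, B q -> A (phi (fst q), snd q)) ->
    v (image g A) (g (z, x))).
  { intros Z' w' phi p B Ht Hphi HB Hpz HBA.
    set (g' := fun q : Z' * X => g (phi (fst q), snd q)).
    set (Hg' := (fun q => Hg (phi q)) : forall q, continuous u v (fun x => g' (q, x))).
    assert (Hg's : continuous w' sigma (gstar u v g' Hg')).
    { intros C q Hq. apply Hphi in Hq. apply Hgs in Hq.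
      assert (E : gstar u v g' Hg' q = gstar u v g Hg (phi q)) by reflexivity.
      rewrite E. refine (mono sigma Hs _ _ _ _ Hq).
      intros f [r [[s [hs <-]] <-]]. exists s. split; auto. }
    pose proof (Ha Z' w' Ht g' Hg' Hg's B (p, x) HB) as Hc.
    assert (E : g' (p, x) = g (phi p, x)) by reflexivity.
    rewrite E, Hpz in Hc. refine (mono v Hv _ _ _ _ Hc).
    intros y [q [hq <-]]. exists (phi (fst q), snd q). split; auto. }
  destruct (classic (exists a, forall W U, nbhd w W z -> nbhd u U x ->
      W a /\ exists y, U y /\ A (a, y))) as [[a Ha']|Hn].
  - assert (ha : w (fun y => y = a) z).
    { apply NNPP; intro H.
      assert (hW : nbhd w (fun y => y <> a) z).
      { intro H'. apply H. refine (mono w Hw _ _ _ _ H'). intros y hy; apply NNPP; exact hy. }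
      destruct (Ha' _ _ hW (nbhd_full u x Hu)) as [h _]. apply h; reflexivity. }
    apply (RED bool (kcl sierpinski_open) (fun b : bool => if b then a else z) false
      (fun q => fst q = true /\ A (a, snd q)) sier_test (sier_cont w a z Hw ha)); auto.
    + intros O U HO HU. simpl in *. apply sier_nbhd_false in HO.
      destruct (Ha' _ _ (nbhd_full w z Hw) HU) as [_ [y [hy hA]]].
      exists (true, y). simpl. auto.
    + intros [b y] [hb hy]; simpl in *; subst b; exact hy.
  - set (F := fun S : set Z => exists W U, nbhd w W z /\ nbhd u U x /\
              forall a y, W a -> U y -> A (a, y) -> S a).
    apply (RED (option Z) (kcl (opF F)) (optphi z) None
      (fun q => match fst q with Some a => A (a, snd q) | None => False end)); auto.
    + apply opF_test.
      * exists (fun _ => True), (fun _ => True).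
        split; [apply nbhd_full; auto|]. split; [apply nbhd_full; auto|]. auto.
      * intros S1 S2 [W1 [U1 [h1 [k1 s1]]]] [W2 [U2 [h2 [k2 s2]]]].
        exists (fun y => W1 y /\ W2 y), (fun y => U1 y /\ U2 y).
        split; [apply nbhd_and; auto|]. split; [apply nbhd_and; auto|].
        intros a y [p1 p2] [q1 q2] hA; split; eauto.
      * intros S S' [W [U [h [k s]]]] Hs'. exists W, U; split; [auto|]; split; [auto|]. intros a y h1 h2 h3; apply Hs'; eauto.
      * intro a. apply NNPP; intro H'. apply Hn. exists a. intros W U hW hU.
        apply NNPP; intro H''. apply H'. exists W, U. split; [auto|]. split; [auto|].
        intros b y hb hy hA ->. apply H''. split; eauto.
    + apply opF_cont; auto. intros W hW. exists W, (fun _ => True).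
      split; auto. split; [apply nbhd_full; auto|]. auto.
    + intros O U HO HU. simpl in *. apply kcl_nbhd in HO as [O' [HO' [HN Hsub]]].
      destruct (HO' HN) as [W [U' [hW [hU' hS]]]].
      destruct (Hzx W (fun y => U y /\ U' y) hW (nbhd_and u _ _ x Hu HU hU'))
        as [[a y] [hA [hWa [hUy hU'y]]]]. simpl in *.
      exists (Some a, y). simpl. split; auto. split; auto.
      apply Hsub. exact (hS a y hWa hU'y hA).
    + intros [[a|] y] hb; simpl in *; [exact hb | destruct hb].
Qed.

Theorem theorem6 (X Y : Type) (u : set X -> set X) (v : set Y -> set Y)
  (sigma : set (CMap u v) -> set (CMap u v)) :
  is_closure u -> is_closure v -> is_closure sigma ->
  (proper u v sigma <-> proper_on u v sigma test_closure_space) /\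
  (admissible u v sigma <-> admissible_on u v sigma test_closure_space).
Proof.
  intros Hu Hv Hs. split; split.
  - intros Hp Z w Ht. apply Hp. apply closure_of_test; exact Ht.
  - apply proper_rev; auto.
  - intros Hp Z w Ht. apply Hp. apply closure_of_test; exact Ht.
  - apply admissible_rev; auto.
Qed.
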